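(* Let $\mathcal{M}$ be a countable Scott set coded by $M = \bigoplus_i X_i$ and let $C \subseteq \omega^2$ be such that $\mathcal{U}^{\mathcal{M}}_C$ is an $\mathcal{M}$-cohesive largeness class. Then the class $$\langle \mathcal{U}^{\mathcal{M}}_C \rangle = \bigcap\{\mathcal{U}^X_e : e\in\omega,\ X\in\mathcal{M},\ \mathcal{U}^{\mathcal{M}}_C\cap\mathcal{U}^X_e \text{ is a largeness class}\}$$ is an $\mathcal{M}$-minimal largeness class contained in $\mathcal{U}^{\mathcal{M}}_C$.
   Context: A largeness class is a non-empty $\mathcal{A} \subseteq 2^\omega$ closed upward under $\subseteq$ such that for every finite cover $Y_0\cup\dots\cup Y_{k-1}=\omega$ some $Y_j \in \mathcal{A}$. A Scott set is a collection of sets closed under Turing reducibility and join such that every infinite binary tree in it has a path in it; it is countable coded by $M$ if it equals $\{X_i : i\in\omega\}$ with $M = \bigoplus_i X_i$. Fix an effective enumeration $\mathcal{U}^Z_0,\mathcal{U}^Z_1,\dots$ (uniform in the oracle $Z$) of all $\Sigma^0_1(Z)$ classes which are upward-closed under $\subseteq$. For $C\subseteq\omega^2$, $\mathcal{U}^{\mathcal{M}}_C = \bigcap_{\langle e,i\rangle\in C}\mathcal{U}^{X_i}_e$. For an infinite set $X$, $\mathcal{L}_X$ is the class of all sets having infinite intersection with $X$. A class $\mathcal{A}$ is $\mathcal{M}$-cohesive if for every $X \in \mathcal{M}$, either $\mathcal{A}\subseteq \mathcal{L}_X$ or $\mathcal{A}\subseteq\mathcal{L}_{\omega\setminus X}$.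 A class $\mathcal{A}$ is $\mathcal{M}$-minimal if for every $X\in\mathcal{M}$ and $e\in\omega$, either $\mathcal{A}\subseteq\mathcal{U}^X_e$ or $\mathcal{A}\cap\mathcal{U}^X_e$ is not a largeness class. *)

(* Defs.v *)
From Stdlib Require Import Arith List Bool Cantor.
Import ListNotations.

Definition set := nat -> bool.
Definition cls := set -> Prop.

Definition pair (x y : nat) : nat := Cantor.to_nat (x, y).
Definition unfst (n : nat) : nat := fst (Cantor.of_nat n).
Definition unsnd (n : nat) : nat := snd (Cantor.of_nat n).

Inductive code : Type :=
| cZero
| cSucc
| cId
| cFst
| cSnd
| cOracle
| cComp (f g : code)
| cPair (f g : code)
| cRec (f g : code)
| cMu (f : code).

Inductive eval (Z : set) : code -> nat -> nat -> Prop :=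
| eZero x : eval Z cZero x 0
| eSucc x : eval Z cSucc x (S x)
| eId x : eval Z cId x x
| eFst x : eval Z cFst x (unfst x)
| eSnd x : eval Z cSnd x (unsnd x)
| eOracle x : eval Z cOracle x (if Z x then 1 else 0)
| eComp f g x y z : eval Z g x y -> eval Z f y z -> eval Z (cComp f g) x z
| ePair f g x y z : eval Z f x y -> eval Z g x z -> eval Z (cPair f g) x (pair y z)
| eRec0 f g x y : eval Z f x y -> eval Z (cRec f g) (pair x 0) y
| eRecS f g x n y z :
    eval Z (cRec f g) (pair x n) y -> eval Z g (pair (pair x n) y) z ->
    eval Z (cRec f g) (pair x (S n)) z
| eMu f x y :
    eval Z f (pair x y) 0 ->
    (forall m, m < y -> exists v, v <> 0 /\ eval Z f (pair x m) v) ->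
    eval Z (cMu f) x y.

(* Goedel numbering: a total, effective, surjective decoding nat -> code. *)
Fixpoint dec (fuel n : nat) : code :=
  match fuel with
  | 0 => cZero
  | S k =>
    let q := n / 10 in
    let a := unfst q in
    let b := unsnd q in
    match n mod 10 with
    | 0 => cZero | 1 => cSucc | 2 => cId | 3 => cFst | 4 => cSnd | 5 => cOracle
    | 6 => cComp (dec k a) (dec k b)
    | 7 => cPair (dec k a) (dec k b)
    | 8 => cRec (dec k a) (dec k b)
    | _ => cMu (dec k q)
    end
  end.
Definition decode (e : nat) : code := dec (S e) e.

Definition W (Z : set) (e : nat) (k : nat) : Prop := exists v, eval Z (decode e) k v.

Definition turing_le (Y Z : set) : Prop :=
  exists c : code, forall n, eval Z c n (if Y n then 1 else 0).

Definition canon (k : nat) : set := fun n => Nat.testbit k n.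

(* The fixed effective enumeration of upward-closed Sigma^0_1(Z) classes:
   U^Z_e = { Y | exists finite F in W^Z_e with F subset Y }. *)
Definition U (Z : set) (e : nat) : cls :=
  fun Y => exists k, W Z e k /\ forall n, canon k n = true -> Y n = true.

Definition subset (X Y : set) : Prop := forall n, X n = true -> Y n = true.
Definition join (X Y : set) : set :=
  fun n => if Nat.even n then X (Nat.div2 n) else Y (Nat.div2 n).

(* bijective coding of binary strings (list head = first bit) *)
Fixpoint strcode (s : list bool) : nat :=
  match s with
  | [] => 0
  | b :: s' => 2 * strcode s' + (if b then 2 else 1)
  end.

Definition prefix_of (P : set) (n : nat) : list bool := map P (seq 0 n).

Definition in_tree (T : set) (s : list bool) : Prop := T (strcode s) = true.
Definition is_tree (T : set) : Prop :=
  forall s t, in_tree T (s ++ t) -> in_tree T s.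
Definition infinite (X : set) : Prop := forall n, exists m, n <= m /\ X m = true.
Definition is_path (P T : set) : Prop := forall n, in_tree T (prefix_of P n).

Definition col (M : set) (i : nat) : set := fun n => M (pair i n).
Definition inM (M : set) (X : set) : Prop := exists i, forall n, col M i n = X n.

Definition scott_coded (M : set) : Prop :=
  (forall Y Z, inM M Z -> turing_le Y Z -> inM M Y) /\
  (forall X Y, inM M X -> inM M Y -> inM M (join X Y)) /\
  (forall T, inM M T -> is_tree T -> infinite T -> exists P, inM M P /\ is_path P T).

Definition cls_inter (A B : cls) : cls := fun Y => A Y /\ B Y.
Definition cls_sub (A B : cls) : Prop := forall Y, A Y -> B Y.

Definition largeness (A : cls) : Prop :=
  (exists Y, A Y) /\
  (forall X Y, A X -> subset X Y -> A Y) /\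
  (forall (k : nat) (Ys : nat -> set),
      (forall n, exists j, j < k /\ Ys j n = true) ->
      exists j, j < k /\ A (Ys j)).

Definition UC (M : set) (C : nat -> nat -> Prop) : cls :=
  fun Y => forall e i, C e i -> U (col M i) e Y.

Definition L (X : set) : cls := fun Y => infinite (fun n => X n && Y n).
Definition compl (X : set) : set := fun n => negb (X n).

Definition M_cohesive (M : set) (A : cls) : Prop :=
  forall X, inM M X -> cls_sub A (L X) \/ cls_sub A (L (compl X)).

Definition M_minimal (M : set) (A : cls) : Prop :=
  forall X e, inM M X -> cls_sub A (U X e) \/ ~ largeness (cls_inter A (U X e)).

Definition gen (M : set) (C : nat -> nat -> Prop) : cls :=
  fun Y => forall e X, inM M X -> largeness (cls_inter (UC M C) (U X e)) -> U X e Y.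

(* Main.v *)
Require Import Defs.
From Stdlib Require Import Arith List Bool Cantor Lia Classical.
Import ListNotations.

Lemma unfst_pair x y : unfst (pair x y) = x.
Proof. unfold unfst, pair. rewrite Cantor.cancel_of_to. reflexivity. Qed.
Lemma unsnd_pair x y : unsnd (pair x y) = y.
Proof. unfold unsnd, pair. rewrite Cantor.cancel_of_to. reflexivity. Qed.
Lemma pair_un m : pair (unfst m) (unsnd m) = m.
Proof. unfold unfst, unsnd, pair. rewrite <- surjective_pairing. apply Cantor.cancel_to_of. Qed.
Lemma pair_inj x y x' y' : pair x y = pair x' y' -> x = x' /\ y = y'.
Proof. intro H. split.
 - rewrite <- (unfst_pair x y), H. apply unfst_pair.
 - rewrite <- (unsnd_pair x y), H. apply unsnd_pair. Qed.

Definition comp (Z : set) (f : nat -> nat) := exists c, forall x, eval Z c x (f x).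

Lemma comp_ext Z f g : (forall x, f x = g x) -> comp Z f -> comp Z g.
Proof. intros H [c Hc]. exists c. intro x. rewrite <- H. apply Hc. Qed.

Lemma comp_zero Z : comp Z (fun _ => 0).
Proof. exists cZero. intro; constructor. Qed.
Lemma comp_id Z : comp Z (fun x => x).
Proof. exists cId. intro; constructor. Qed.
Lemma comp_oracle Z : comp Z (fun x => if Z x then 1 else 0).
Proof. exists cOracle. intro; constructor. Qed.
Lemma comp_o Z f g : comp Z f -> comp Z g -> comp Z (fun x => f (g x)).
Proof. intros [cf Hf] [cg Hg]. exists (cComp cf cg). intro x. econstructor; eauto. Qed.
Lemma comp_S Z g : comp Z g -> comp Z (fun x => S (g x)).
Proof. intros H. apply (comp_o Z S g); auto. exists cSucc. intro; constructor. Qed.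
Lemma comp_unfst Z g : comp Z g -> comp Z (fun x => unfst (g x)).
Proof. intros H. apply (comp_o Z unfst g); auto. exists cFst. intro; constructor. Qed.
Lemma comp_unsnd Z g : comp Z g -> comp Z (fun x => unsnd (g x)).
Proof. intros H. apply (comp_o Z unsnd g); auto. exists cSnd. intro; constructor. Qed.
Lemma comp_pair Z f g : comp Z f -> comp Z g -> comp Z (fun x => pair (f x) (g x)).
Proof. intros [cf Hf] [cg Hg]. exists (cPair cf cg). intro x. econstructor; eauto. Qed.
Lemma comp_Z Z a : comp Z a -> comp Z (fun x => if Z (a x) then 1 else 0).
Proof. intro H. apply (comp_o Z (fun x => if Z x then 1 else 0) a); auto. apply comp_oracle. Qed.
Lemma comp_const Z n : comp Z (fun _ => n).
Proof. induction n. apply comp_zero. apply (comp_S Z (fun _ => n)); auto. Qed.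

Fixpoint prec (f : nat -> nat) (g : nat -> nat -> nat -> nat) (x n : nat) : nat :=
  match n with 0 => f x | S n => g x n (prec f g x n) end.

Definition comp3 Z (g : nat -> nat -> nat -> nat) :=
  comp Z (fun w => g (unfst (unfst w)) (unsnd (unfst w)) (unsnd w)).
Definition comp2 Z (g : nat -> nat -> nat) :=
  comp Z (fun w => g (unfst w) (unsnd w)).

Lemma comp_prec0 Z f g : comp Z f -> comp3 Z g -> comp2 Z (prec f g).
Proof. intros [cf Hf] [cg Hg]. exists (cRec cf cg). intro w.
  rewrite <- (pair_un w) at 1. generalize (unfst w) (unsnd w). intros x n.
  induction n; simpl.
  - constructor. auto.
  - econstructor. eauto. specialize (Hg (pair (pair x n) (prec f g x n))).
    rewrite !unfst_pair, !unsnd_pair in Hg. exact Hg. Qed.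

Lemma comp2_app Z g a b : comp2 Z g -> comp Z a -> comp Z b -> comp Z (fun x => g (a x) (b x)).
Proof. intros H Ha Hb. 
  eapply comp_ext; [| apply (comp_o Z _ (fun x => pair (a x) (b x)) H); apply comp_pair; auto].
  intro x. simpl. rewrite unfst_pair, unsnd_pair. reflexivity. Qed.
Lemma comp3_app Z g a b c : comp3 Z g -> comp Z a -> comp Z b -> comp Z c ->
  comp Z (fun x => g (a x) (b x) (c x)).
Proof. intros H Ha Hb Hc.
  eapply comp_ext; [| apply (comp_o Z _ (fun x => pair (pair (a x) (b x)) (c x)) H);
    apply comp_pair; [apply comp_pair|]; auto].
  intro x. simpl. rewrite !unfst_pair, !unsnd_pair. reflexivity. Qed.

Lemma comp_prec Z f g a b : comp Z f -> comp3 Z g -> comp Z a -> comp Z b ->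
  comp Z (fun x => prec f g (a x) (b x)).
Proof. intros. apply comp2_app; auto. apply comp_prec0; auto. Qed.

Ltac cauto :=
  repeat match goal with
  | |- comp2 _ _ => unfold comp2
  | |- comp3 _ _ => unfold comp3
  | |- comp _ (fun x => x) => apply comp_id
  | |- comp _ unfst => apply (comp_unfst _ (fun x => x)); apply comp_id
  | |- comp _ unsnd => apply (comp_unsnd _ (fun x => x)); apply comp_id
  | |- comp _ (fun _ => ?c) => apply comp_const
  | |- comp _ (fun x => S (@?a x)) => apply (comp_S _ a)
  | |- comp _ (fun x => unfst (@?a x)) => apply (comp_unfst _ a)
  | |- comp _ (fun x => unsnd (@?a x)) => apply (comp_unsnd _ a)
  | |- comp _ (fun x => pair (@?a x) (@?b x)) => apply (comp_pair _ a b)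
  | |- comp ?Z (fun x => if ?Z (@?a x) then 1 else 0) => apply (comp_Z _ a)
  | |- comp _ (fun x => prec ?f ?g (@?a x) (@?b x)) => apply (comp_prec _ f g a b)
  | |- comp _ (fun x => ?g (@?a x) (@?b x) (@?c x)) =>
        apply (comp3_app _ g a b c); [first [assumption | solve [eauto with cdb]] | | |]
  | |- comp _ (fun x => ?g (@?a x) (@?b x)) =>
        apply (comp2_app _ g a b); [first [assumption | solve [eauto with cdb]] | |]
  | |- comp _ (fun x => ?g (@?a x)) =>
        apply (comp_o _ g a); [first [assumption | solve [eauto with cdb]] | ]
  | |- comp _ ?f => assumption
  end.

Create HintDb cdb.

Lemma c_add Z : comp2 Z Nat.add.
Proof. eapply comp_ext; [|apply (comp_prec0 Z (fun x => x) (fun _ _ y => S y)); cauto].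
  intro w. simpl. generalize (unfst w) (unsnd w). intros x n. induction n; simpl; lia. Qed.
Hint Resolve c_add : cdb.

Definition ifz (c a b : nat) := match c with 0 => a | S _ => b end.
Lemma c_ifz Z : comp3 Z ifz.
Proof. eapply comp_ext; [| unfold comp3;
  apply (comp_prec Z (fun x => unfst x) (fun x _ _ => unsnd x) (fun w => pair (unsnd (unfst w)) (unsnd w)) (fun w => unfst (unfst w))); cauto].
  intro w. simpl. destruct (unfst (unfst w)); simpl; rewrite ?unfst_pair, ?unsnd_pair; reflexivity. Qed.
Hint Resolve c_ifz : cdb.

Lemma c_pred Z : comp Z Nat.pred.
Proof. eapply comp_ext; [| apply (comp_prec Z (fun _ => 0) (fun _ n _ => n) (fun _ => 0) (fun x => x)); cauto].
  intro n. destruct n; reflexivity. Qed.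
Hint Resolve c_pred : cdb.
Lemma c_sub Z : comp2 Z Nat.sub.
Proof. eapply comp_ext; [| apply (comp_prec0 Z (fun x => x) (fun _ _ y => Nat.pred y)); cauto].
  intro w. simpl. generalize (unfst w) (unsnd w). intros x n. induction n; simpl; lia. Qed.
Hint Resolve c_sub : cdb.
Lemma c_mul Z : comp2 Z Nat.mul.
Proof. eapply comp_ext; [| apply (comp_prec0 Z (fun _ => 0) (fun x _ y => y + x)); cauto].
  intro w. simpl. generalize (unfst w) (unsnd w). intros x n. induction n; simpl; lia. Qed.
Hint Resolve c_mul : cdb.

Lemma c_b2n_andb Z a b : comp Z (fun x => Nat.b2n (a x)) -> comp Z (fun x => Nat.b2n (b x)) ->
  comp Z (fun x => Nat.b2n (a x && b x)).
Proof. intros. eapply comp_ext; [| apply (comp3_app Z ifz (fun x => Nat.b2n (a x)) (fun _ => 0) (fun x => Nat.b2n (b x))); cauto; eauto].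
  intro x. simpl. destruct (a x), (b x); reflexivity. Qed.
Lemma c_b2n_negb Z a : comp Z (fun x => Nat.b2n (a x)) -> comp Z (fun x => Nat.b2n (negb (a x))).
Proof. intros. eapply comp_ext; [| apply (comp3_app Z ifz (fun x => Nat.b2n (a x)) (fun _ => 1) (fun _ => 0)); cauto; eauto].
  intro x. simpl. destruct (a x); reflexivity. Qed.
Lemma c_b2n_orb Z a b : comp Z (fun x => Nat.b2n (a x)) -> comp Z (fun x => Nat.b2n (b x)) ->
  comp Z (fun x => Nat.b2n (a x || b x)).
Proof. intros. eapply comp_ext; [| apply (c_b2n_negb Z (fun x => negb (a x) && negb (b x)));
  apply c_b2n_andb; apply c_b2n_negb; auto].
  intro x. simpl. destruct (a x), (b x); reflexivity. Qed.
Lemma c_b2n_implb Z a b : comp Z (fun x => Nat.b2n (a x)) -> comp Z (fun x => Nat.b2n (b x)) ->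
  comp Z (fun x => Nat.b2n (implb (a x) (b x))).
Proof. intros. eapply comp_ext; [| apply (c_b2n_orb Z (fun x => negb (a x)) b); auto; apply c_b2n_negb; auto].
  intro x. simpl. destruct (a x), (b x); reflexivity. Qed.
Lemma c_b2n_leb Z a b : comp Z a -> comp Z b -> comp Z (fun x => Nat.b2n (a x <=? b x)).
Proof. intros. eapply comp_ext; [| apply (comp3_app Z ifz (fun x => a x - b x) (fun _ => 1) (fun _ => 0)); cauto].
  intro x. simpl. destruct (a x <=? b x) eqn:E; [apply Nat.leb_le in E | apply Nat.leb_gt in E];
  destruct (a x - b x) eqn:F; simpl; try reflexivity; lia. Qed.
Lemma c_b2n_ltb Z a b : comp Z a -> comp Z b -> comp Z (fun x => Nat.b2n (a x <? b x)).
Proof. intros. eapply comp_ext; [| apply (c_b2n_leb Z (fun x => S (a x)) b); cauto].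
  intro x. reflexivity. Qed.
Lemma c_b2n_eqb Z a b : comp Z a -> comp Z b -> comp Z (fun x => Nat.b2n (a x =? b x)).
Proof. intros. eapply comp_ext; [| apply (c_b2n_andb Z (fun x => a x <=? b x) (fun x => b x <=? a x));
  apply c_b2n_leb; auto].
  intro x. simpl. destruct (a x =? b x) eqn:E; [apply Nat.eqb_eq in E | apply Nat.eqb_neq in E].
  rewrite E, Nat.leb_refl. reflexivity.
  destruct (a x <=? b x) eqn:E1, (b x <=? a x) eqn:E2; try reflexivity.
  apply Nat.leb_le in E1, E2. lia. Qed.
Lemma c_b2n_true Z : comp Z (fun _ => Nat.b2n true).
Proof. apply comp_const. Qed.
Lemma c_b2n_false Z : comp Z (fun _ => Nat.b2n false).
Proof. apply comp_const. Qed.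
Lemma c_b2n_Z Z a : comp Z a -> comp Z (fun x => Nat.b2n (Z (a x))).
Proof. intros. apply comp_Z; auto. Qed.

Fixpoint fa (q : nat -> bool) (n : nat) : bool :=
  match n with 0 => true | S n => fa q n && q n end.
Definition ex (q : nat -> bool) (n : nat) : bool := negb (fa (fun i => negb (q i)) n).

Lemma c_fa Z (E : nat -> nat -> bool) b :
  comp Z (fun w => Nat.b2n (E (unfst w) (unsnd w))) -> comp Z b ->
  comp Z (fun x => Nat.b2n (fa (E x) (b x))).
Proof. intros HE Hb.
  eapply comp_ext; [| apply (comp_prec Z (fun _ => 1) (fun x i y => ifz y 0 (Nat.b2n (E x i))) (fun x => x) b); auto; try apply comp_const; try apply comp_id].
  - intro x. simpl. generalize (b x). intro n. induction n; simpl. reflexivity.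
    rewrite IHn. destruct (fa (E x) n); reflexivity.
  - unfold comp3. apply (comp3_app Z ifz (fun w => unsnd w) (fun _ => 0) (fun w => Nat.b2n (E (unfst (unfst w)) (unsnd (unfst w))))); [apply c_ifz | cauto | cauto |].
    apply (comp_o Z (fun w => Nat.b2n (E (unfst w) (unsnd w))) (fun w => unfst w)); cauto. Qed.
Lemma c_ex Z (E : nat -> nat -> bool) b :
  comp Z (fun w => Nat.b2n (E (unfst w) (unsnd w))) -> comp Z b ->
  comp Z (fun x => Nat.b2n (ex (E x) (b x))).
Proof. intros HE Hb. unfold ex. apply c_b2n_negb.
  apply (c_fa Z (fun x i => negb (E x i))); auto. apply c_b2n_negb. auto. Qed.

Ltac bauto :=
  repeat match goal with
  | |- comp2 _ _ => unfold comp2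
  | |- comp3 _ _ => unfold comp3
  | |- comp _ (fun x => Nat.b2n (@?a x && @?b x)) => apply (c_b2n_andb _ a b)
  | |- comp _ (fun x => Nat.b2n (@?a x || @?b x)) => apply (c_b2n_orb _ a b)
  | |- comp _ (fun x => Nat.b2n (implb (@?a x) (@?b x))) => apply (c_b2n_implb _ a b)
  | |- comp _ (fun x => Nat.b2n (negb (@?a x))) => apply (c_b2n_negb _ a)
  | |- comp _ (fun x => Nat.b2n (@?a x <=? @?b x)) => apply (c_b2n_leb _ a b)
  | |- comp _ (fun x => Nat.b2n (@?a x <? @?b x)) => apply (c_b2n_ltb _ a b)
  | |- comp _ (fun x => Nat.b2n (@?a x =? @?b x)) => apply (c_b2n_eqb _ a b)
  | |- comp ?Z (fun x => Nat.b2n (?Z (@?a x))) => apply (c_b2n_Z _ a)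
  | |- comp _ (fun x => Nat.b2n (fa (fun i => @?E x i) (@?b x))) => apply (c_fa _ E b)
  | |- comp _ (fun x => Nat.b2n (ex (fun i => @?E x i) (@?b x))) => apply (c_ex _ E b)
  | |- comp _ (fun x => x) => apply comp_id
  | |- comp _ unfst => apply (comp_unfst _ (fun x => x)); apply comp_id
  | |- comp _ unsnd => apply (comp_unsnd _ (fun x => x)); apply comp_id
  | |- comp _ (fun _ => ?c) => apply comp_const
  | |- comp _ (fun x => S (@?a x)) => apply (comp_S _ a)
  | |- comp _ (fun x => unfst (@?a x)) => apply (comp_unfst _ a)
  | |- comp _ (fun x => unsnd (@?a x)) => apply (comp_unsnd _ a)
  | |- comp _ (fun x => pair (@?a x) (@?b x)) => apply (comp_pair _ a b)
  | |- comp ?Z (fun x => if ?Z (@?a x) then 1 else 0) => apply (comp_Z _ a)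
  | |- comp _ (fun x => prec ?f ?g (@?a x) (@?b x)) => apply (comp_prec _ f g a b)
  | |- comp _ (fun x => ?g (@?a x) (@?b x) (@?c x)) =>
        apply (comp3_app _ g a b c); [first [assumption | solve [eauto with cdb]] | | |]
  | |- comp _ (fun x => ?g (@?a x) (@?b x)) =>
        apply (comp2_app _ g a b); [first [assumption | solve [eauto with cdb]] | |]
  | |- comp _ (fun x => ?g (@?a x)) =>
        apply (comp_o _ g a); [first [assumption | solve [eauto with cdb]] | ]
  | |- comp _ ?f => assumption
  end.

Lemma c_odd Z : comp Z (fun n => Nat.b2n (Nat.odd n)).
Proof. eapply comp_ext; [| apply (comp_prec Z (fun _ => 0) (fun _ _ y => 1 - y) (fun _ => 0) (fun x => x)); bauto].
  intro n. induction n; cbn [prec]. reflexivity. rewrite IHn, Nat.odd_succ, <- Nat.negb_odd.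
  destruct (Nat.odd n); reflexivity. Qed.
Hint Resolve c_odd : cdb.

Lemma div2_S n : Nat.div2 (S n) = Nat.div2 n + Nat.b2n (Nat.odd n).
Proof. induction n as [n IH] using (well_founded_induction lt_wf).
  destruct n as [|[|n]]. reflexivity. reflexivity.
  change (Nat.div2 (S (S (S n)))) with (S (Nat.div2 (S n))).
  change (Nat.div2 (S (S n))) with (S (Nat.div2 n)).
  rewrite (IH n ltac:(lia)). rewrite Nat.odd_succ_succ. lia. Qed.

Lemma c_div2 Z : comp Z Nat.div2.
Proof. eapply comp_ext; [| apply (comp_prec Z (fun _ => 0) (fun _ n y => y + Nat.b2n (Nat.odd n)) (fun _ => 0) (fun x => x)); bauto].
  2:{ apply (comp_o Z (fun n => Nat.b2n (Nat.odd n)) (fun w => unsnd (unfst w))); [apply c_odd| bauto]. }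
  intro n. induction n; cbn [prec]. reflexivity. rewrite IHn, div2_S. reflexivity. Qed.
Hint Resolve c_div2 : cdb.

Lemma prec_div2 N i : prec (fun x => x) (fun _ _ y => Nat.div2 y) N (S i) =
   prec (fun x => x) (fun _ _ y => Nat.div2 y) (Nat.div2 N) i.
Proof. induction i. reflexivity. cbn [prec] in *. rewrite IHi. reflexivity. Qed.
Lemma testbit_prec N i : Nat.testbit N i = Nat.odd (prec (fun x => x) (fun _ _ y => Nat.div2 y) N i).
Proof. revert N. induction i; intro N. reflexivity. rewrite prec_div2. simpl Nat.testbit. apply IHi. Qed.
Lemma c_testbit Z : comp2 Z (fun N i => Nat.b2n (Nat.testbit N i)).
Proof. eapply comp_ext; [| apply (comp_o Z (fun n => Nat.b2n (Nat.odd n)) (fun w => prec (fun x => x) (fun _ _ y => Nat.div2 y) (unfst w) (unsnd w))); [apply c_odd|bauto]].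
  intro w. cbv beta. rewrite testbit_prec. reflexivity. Qed.
Hint Resolve c_testbit : cdb.
Lemma c_b2n_testbit Z a b : comp Z a -> comp Z b -> comp Z (fun x => Nat.b2n (Nat.testbit (a x) (b x))).
Proof. intros. apply (comp2_app Z (fun N i => Nat.b2n (Nat.testbit N i))); auto. apply c_testbit. Qed.

Ltac pinj := repeat match goal with E : pair _ _ = pair _ _ |- _ => apply pair_inj in E; destruct E; subst end.

Lemma inv_rec Z f g a n v : eval Z (cRec f g) (pair a n) v ->
  (n = 0 /\ eval Z f a v) \/
  (exists n' y, n = S n' /\ eval Z (cRec f g) (pair a n') y /\ eval Z g (pair (pair a n') y) v).
Proof. intro H. inversion H; subst.
  - pinj. left. auto.
  - pinj. right. eauto. Qed.

Lemma inv_rec' Z f g x v : eval Z (cRec f g) x v ->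
  let a := unfst x in let n := unsnd x in
  (n = 0 /\ eval Z f a v) \/
  (exists n' y, n = S n' /\ eval Z (cRec f g) (pair a n') y /\ eval Z g (pair (pair a n') y) v).
Proof. intro H. rewrite <- (pair_un x) in H. apply inv_rec in H. exact H. Qed.

Lemma eval_det Z c : forall x v w, eval Z c x v -> eval Z c x w -> v = w.
Proof. induction c; intros x v w H1 H2.
  1-6: inversion H1; inversion H2; subst; reflexivity.
  - inversion H1; inversion H2; subst. assert (y = y0) by eauto. subst. eauto.
  - inversion H1; inversion H2; subst. f_equal; eauto.
  -
    rewrite <- (pair_un x) in *.
    generalize dependent w. generalize dependent v. generalize (unsnd x). intro n.
    induction n; intros v Hv w Hw; apply inv_rec in Hv, Hw.
    + destruct Hv as [[_ Hv]|[? [? [? _]]]]; [|lia]. destruct Hw as [[_ Hw]|[? [? [? _]]]]; [|lia]. eauto.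
    + destruct Hv as [[? _]|[n1 [y1 [E1 [Hv1 Hv2]]]]]; [lia|]. destruct Hw as [[? _]|[n2 [y2 [E2 [Hw1 Hw2]]]]]; [lia|].
      injection E1; injection E2; intros; subst. assert (y1 = y2) by eauto. subst. eauto.
  -
    inversion H1 as [| | | | | | | | | | f0 x0 y0 A1 A2]; inversion H2 as [| | | | | | | | | | f1 x1 y1 B1 B2]; subst.
    destruct (Nat.lt_trichotomy v w) as [Hl|[He|Hl]]; auto.
    + destruct (B2 v Hl) as [u [Hu1 Hu2]]. exfalso. apply Hu1. eapply IHc; eauto.
    + destruct (A2 w Hl) as [u [Hu1 Hu2]]. exfalso. apply Hu1. eapply IHc; eauto.
Qed.

Fixpoint rel (d c : code) : code :=
  match c with
  | cOracle => d
  | cComp f g => cComp (rel d f) (rel d g)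
  | cPair f g => cPair (rel d f) (rel d g)
  | cRec f g => cRec (rel d f) (rel d g)
  | cMu f => cMu (rel d f)
  | c => c
  end.

Lemma rel_fwd (Z A : set) d : (forall n, eval Z d n (if A n then 1 else 0)) ->
  forall c x v, eval A c x v -> eval Z (rel d c) x v.
Proof. intros Hd c. induction c; intros x v H; simpl.
  1-5: inversion H; subst; constructor.
  - inversion H; subst. apply Hd.
  - inversion H; subst. econstructor; eauto.
  - inversion H; subst. econstructor; eauto.
  - rewrite <- (pair_un x) in *. generalize dependent v. generalize (unsnd x). intro n.
    induction n; intros v Hv; apply inv_rec in Hv.
    + destruct Hv as [[_ Hv]|[? [? [? _]]]]; [|lia]. constructor. auto.
    + destruct Hv as [[? _]|[n1 [y1 [E1 [Hv1 Hv2]]]]]; [lia|]. injection E1; intros; subst.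
      econstructor; eauto.
  - inversion H as [| | | | | | | | | | f0 x0 y0 A1 A2]; subst. constructor; auto.
    intros m Hm. destruct (A2 m Hm) as [u [? ?]]. eauto.
Qed.

Lemma rel_bwd (Z A : set) d : (forall n, eval Z d n (if A n then 1 else 0)) ->
  forall c x v, eval Z (rel d c) x v -> eval A c x v.
Proof. intros Hd c. induction c; intros x v H; simpl in H.
  1-5: inversion H; subst; constructor.
  - assert (v = if A x then 1 else 0) by (eapply eval_det; eauto). subst. constructor.
  - inversion H; subst. econstructor; eauto.
  - inversion H; subst. econstructor; eauto.
  - rewrite <- (pair_un x) in *. generalize dependent v. generalize (unsnd x). intro n.
    induction n; intros v Hv; apply inv_rec in Hv.
    + destruct Hv as [[_ Hv]|[? [? [? _]]]]; [|lia]. constructor. auto.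
    + destruct Hv as [[? _]|[n1 [y1 [E1 [Hv1 Hv2]]]]]; [lia|]. injection E1; intros; subst.
      econstructor; eauto.
  - inversion H as [| | | | | | | | | | f0 x0 y0 A1 A2]; subst. constructor; auto.
    intros m Hm. destruct (A2 m Hm) as [u [? ?]]. eauto.
Qed.

Definition mu_st (H : nat -> nat -> nat) (p t : nat) : nat :=
  prec (fun _ => 0) (fun p t r => match r with 0 => match H p t with 0 => 1 | 1 => S (S t) | _ => 0 end | _ => r end) p t.

Fixpoint bsim (Z : set) (c : code) (x s : nat) {struct c} : nat :=
  match c with
  | cZero => 1
  | cSucc => S (S x)
  | cId => S x
  | cFst => S (unfst x)
  | cSnd => S (unsnd x)
  | cOracle => S (if Z x then 1 else 0)
  | cComp f g => match bsim Z g x s with 0 => 0 | S y => bsim Z f y s end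
  | cPair f g => match bsim Z f x s with 0 => 0 | S y =>
                   match bsim Z g x s with 0 => 0 | S z => S (pair y z) end end
  | cRec f g => prec (fun p => bsim Z f (unfst p) (unsnd p))
       (fun p n r => match r with 0 => 0 | S y => bsim Z g (pair (pair (unfst p) n) y) (unsnd p) end)
       (pair (unfst x) s) (unsnd x)
  | cMu f => match mu_st (fun p t => bsim Z f (pair (unfst p) t) (unsnd p)) (pair x s) s with
             | S (S y) => S y | _ => 0 end
  end.

Lemma mu_st_inv H p t :
  (mu_st H p t = 0 -> forall m, m < t -> H p m >= 2) /\
  (forall y, mu_st H p t = S (S y) -> y < t /\ H p y = 1 /\ forall m, m < y -> H p m >= 2).
Proof. induction t; unfold mu_st in *; cbn [prec] in *.
  - split. intros _ m Hm; lia. intros y Hy; discriminate.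
  - destruct IHt as [I1 I2].
    destruct (prec _ _ p t) as [|[|y]] eqn:E.
    + specialize (I1 eq_refl). destruct (H p t) as [|[|w]] eqn:Eh.
      * split; intros; discriminate.
      * split. intros; discriminate. intros y Hy. injection Hy; intro; subst. repeat split; auto.
      * split. intros _ m Hm. destruct (Nat.eq_dec m t). subst. lia. apply I1. lia. intros; discriminate.
    + split; intros; discriminate.
    + specialize (I2 y eq_refl). split. intros; discriminate. intros y' Hy. injection Hy; intro; subst.
      destruct I2 as [? [? ?]]. repeat split; auto.
Qed.

Lemma mu_st_S H p t : mu_st H p (S t) =
  match mu_st H p t with 0 => match H p t with 0 => 1 | 1 => S (S t) | _ => 0 end | r => r end.
Proof. unfold mu_st. cbn [prec]. destruct (prec _ _ p t); reflexivity. Qed.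

Lemma mu_st_zero H p t : (forall m, m < t -> H p m >= 2) -> mu_st H p t = 0.
Proof. induction t; intro Hm. reflexivity. rewrite mu_st_S.
  rewrite IHt by (intros; apply Hm; lia). specialize (Hm t ltac:(lia)).
  destruct (H p t) as [|[|w]]; lia || reflexivity. Qed.

Lemma mu_st_found H p y t : H p y = 1 -> (forall m, m < y -> H p m >= 2) -> y < t ->
  mu_st H p t = S (S y).
Proof. intros H1 H2. induction t; intro Ht. lia.
  rewrite mu_st_S.
  destruct (Nat.eq_dec y t).
  - subst. rewrite (mu_st_zero H p t H2). rewrite H1. reflexivity.
  - rewrite IHt by lia. reflexivity. Qed.

Lemma bsim_sound Z c : forall x s v, bsim Z c x s = S v -> eval Z c x v.
Proof. induction c; intros x s v Hb; simpl in Hb.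
  1-6: injection Hb; intro; subst; constructor.
  - destruct (bsim Z c2 x s) eqn:E; [discriminate|]. econstructor; eauto.
  - destruct (bsim Z c1 x s) eqn:E; [discriminate|]. destruct (bsim Z c2 x s) eqn:E2; [discriminate|].
    injection Hb; intro; subst. econstructor; eauto.
  - rewrite <- (pair_un x). revert v Hb. generalize (unsnd x). intro n.
    induction n; intros v Hb; cbn [prec] in Hb.
    + rewrite unfst_pair, unsnd_pair in Hb. constructor. eauto.
    + destruct (prec _ _ _ n) eqn:E; [discriminate|]. rewrite unfst_pair, unsnd_pair in Hb.
      econstructor; eauto.
  - destruct (mu_st _ _ s) as [|[|y]] eqn:E; try discriminate. injection Hb; intro; subst.
    destruct (proj2 (mu_st_inv _ _ _) v E) as [_ [H1 H2]].
    rewrite unfst_pair, unsnd_pair in H1. constructor. eauto.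
    intros m Hm. specialize (H2 m Hm). rewrite unfst_pair, unsnd_pair in H2.
    destruct (bsim Z c (pair x m) s) as [|w] eqn:Ew. lia. exists w. split. lia. eauto.
Qed.

Lemma fin_bound (P : nat -> nat -> Prop) y :
  (forall m, m < y -> exists s0, forall s, s0 <= s -> P m s) ->
  exists s0, forall m s, m < y -> s0 <= s -> P m s.
Proof. induction y; intro H. exists 0. intros; lia.
  destruct IHy as [s1 Hs1]. intros; apply H; lia.
  destruct (H y ltac:(lia)) as [s2 Hs2]. exists (max s1 s2). intros m s Hm Hs.
  destruct (Nat.eq_dec m y). subst. apply Hs2. lia. apply Hs1; lia. Qed.

Lemma bsim_complete Z c : forall x v, eval Z c x v -> exists s0, forall s, s0 <= s -> bsim Z c x s = S v.
Proof. induction c; intros x v Hv.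
  1-6: inversion Hv; subst; exists 0; intros; reflexivity.
  - inversion Hv; subst. destruct (IHc2 _ _ H1) as [s1 H1']. destruct (IHc1 _ _ H4) as [s2 H2'].
    exists (max s1 s2). intros s Hs. simpl. rewrite H1' by lia. apply H2'. lia.
  - inversion Hv; subst. destruct (IHc1 _ _ H1) as [s1 H1']. destruct (IHc2 _ _ H4) as [s2 H2'].
    exists (max s1 s2). intros s Hs. simpl. rewrite H1' by lia. rewrite H2' by lia. reflexivity.
  - rewrite <- (pair_un x) in Hv |- *. revert v Hv. generalize (unsnd x) (unfst x). intros n a.
    induction n; intros v Hv; apply inv_rec in Hv.
    + destruct Hv as [[_ Hv]|[? [? [? _]]]]; [|lia]. destruct (IHc1 _ _ Hv) as [s1 Hs1].
      exists s1. intros s Hs. simpl. rewrite unsnd_pair, unfst_pair. cbn [prec].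
      rewrite unfst_pair, unsnd_pair. auto.
    + destruct Hv as [[? _]|[n1 [y1 [E1 [Hv1 Hv2]]]]]; [lia|]. injection E1; intros; subst.
      destruct (IHn _ Hv1) as [s1 Hs1]. destruct (IHc2 _ _ Hv2) as [s2 Hs2].
      exists (max s1 s2). intros s Hs. specialize (Hs1 s ltac:(lia)). simpl in Hs1 |- *.
      rewrite unsnd_pair, unfst_pair in *. cbn [prec]. rewrite Hs1. rewrite unfst_pair, unsnd_pair. apply Hs2. lia.
  - inversion Hv as [| | | | | | | | | | f0 x0 y0 A1 A2]; subst.
    destruct (IHc _ _ A1) as [s1 Hs1].
    destruct (fin_bound (fun m s => exists u, u <> 0 /\ bsim Z c (pair x m) s = S u) v) as [s2 Hs2].
    { intros m Hm. destruct (A2 m Hm) as [u [Hu1 Hu2]]. destruct (IHc _ _ Hu2) as [s3 Hs3].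
      exists s3. intros s Hs. exists u. auto. }
    exists (max (S v) (max s1 s2)). intros s Hs. simpl.
    rewrite (mu_st_found _ _ v). reflexivity.
    + rewrite unfst_pair, unsnd_pair. apply Hs1. lia.
    + intros m Hm. rewrite unfst_pair, unsnd_pair. destruct (Hs2 m s Hm ltac:(lia)) as [u [? E]].
      rewrite E. lia.
    + lia.
Qed.

Lemma prec_ext f g g' x n : (forall a b c, g a b c = g' a b c) -> prec f g x n = prec f g' x n.
Proof. intro H. induction n; simpl; congruence. Qed.

Lemma c_bsim Z c : comp2 Z (bsim Z c).
Proof. induction c; unfold comp2; simpl.
  1-6: bauto.
  - eapply comp_ext; [| apply (comp3_app Z ifz (fun w => bsim Z c2 (unfst w) (unsnd w)) (fun _ => 0)
       (fun w => bsim Z c1 (Nat.pred (bsim Z c2 (unfst w) (unsnd w))) (unsnd w))); bauto].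
    intro w. simpl. destruct (bsim Z c2 (unfst w) (unsnd w)); reflexivity.
  - eapply comp_ext; [| apply (comp3_app Z ifz (fun w => bsim Z c1 (unfst w) (unsnd w)) (fun _ => 0)
       (fun w => ifz (bsim Z c2 (unfst w) (unsnd w)) 0 (S (pair (Nat.pred (bsim Z c1 (unfst w) (unsnd w))) (Nat.pred (bsim Z c2 (unfst w) (unsnd w))))))); bauto].
    intro w. simpl. destruct (bsim Z c1 (unfst w) (unsnd w)); simpl; [reflexivity|].
    destruct (bsim Z c2 (unfst w) (unsnd w)); reflexivity.
  - eapply comp_ext; [| apply (comp_prec Z (fun p => bsim Z c1 (unfst p) (unsnd p))
       (fun p n r => ifz r 0 (bsim Z c2 (pair (pair (unfst p) n) (Nat.pred r)) (unsnd p)))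
       (fun w => pair (unfst (unfst w)) (unsnd w)) (fun w => unsnd (unfst w))); bauto].
    intro w. apply prec_ext. intros a b r. destruct r; reflexivity.
  - eapply comp_ext; [| apply (comp_o Z Nat.pred (fun w => prec (fun _ => 0) (fun p t r =>
        ifz r (ifz (bsim Z c (pair (unfst p) t) (unsnd p)) 1
                   (ifz (Nat.pred (bsim Z c (pair (unfst p) t) (unsnd p))) (S (S t)) 0)) r)
       (pair (unfst w) (unsnd w)) (unsnd w))); bauto].
    intro w. unfold mu_st. rewrite (prec_ext _ _ (fun p t r => match r with 0 => match bsim Z c (pair (unfst p) t) (unsnd p) with 0 => 1 | 1 => S (S t) | _ => 0 end | _ => r end)).
    + destruct (prec _ _ _ _) as [|[|]]; reflexivity.
    + intros a b r. destruct r; [|reflexivity]. simpl. destruct (bsim Z c _ _) as [|[|]]; reflexivity.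
    + apply c_pred.
Qed.

Fixpoint cnt (q : nat -> bool) (n : nat) : nat :=
  match n with 0 => 0 | S n => cnt q n + Nat.b2n (q n) end.

Lemma c_cnt Z (E : nat -> nat -> bool) b :
  comp Z (fun w => Nat.b2n (E (unfst w) (unsnd w))) -> comp Z b ->
  comp Z (fun x => cnt (E x) (b x)).
Proof. intros HE Hb.
  eapply comp_ext; [| apply (comp_prec Z (fun _ => 0) (fun x i y => y + Nat.b2n (E x i)) (fun x => x) b); auto; try apply comp_const; try apply comp_id].
  - intro x. simpl. generalize (b x). intro n. induction n; cbn [prec cnt]. reflexivity. rewrite IHn. reflexivity.
  - unfold comp3. apply (comp2_app Z Nat.add (fun w => unsnd w) (fun w => Nat.b2n (E (unfst (unfst w)) (unsnd (unfst w))))); [apply c_add | cauto |].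
    apply (comp_o Z (fun w => Nat.b2n (E (unfst w) (unsnd w))) (fun w => unfst w)); cauto. Qed.

Lemma c_pow Z : comp2 Z Nat.pow.
Proof. eapply comp_ext; [| apply (comp_prec0 Z (fun _ => 1) (fun x _ y => y * x)); cauto].
  intro w. simpl. generalize (unfst w) (unsnd w). intros x n. induction n; cbn [prec]. reflexivity.
  rewrite IHn. simpl. lia. Qed.
Hint Resolve c_pow : cdb.

Ltac bt :=
  repeat match goal with
  | |- comp2 _ _ => unfold comp2
  | |- comp3 _ _ => unfold comp3
  | |- comp _ (fun x => Nat.b2n (@?a x && @?b x)) => apply (c_b2n_andb _ a b)
  | |- comp _ (fun x => Nat.b2n (@?a x || @?b x)) => apply (c_b2n_orb _ a b)
  | |- comp _ (fun x => Nat.b2n (implb (@?a x) (@?b x))) => apply (c_b2n_implb _ a b)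
  | |- comp _ (fun x => Nat.b2n (negb (@?a x))) => apply (c_b2n_negb _ a)
  | |- comp _ (fun x => Nat.b2n (@?a x <=? @?b x)) => apply (c_b2n_leb _ a b)
  | |- comp _ (fun x => Nat.b2n (@?a x <? @?b x)) => apply (c_b2n_ltb _ a b)
  | |- comp _ (fun x => Nat.b2n (@?a x =? @?b x)) => apply (c_b2n_eqb _ a b)
  | |- comp _ (fun x => Nat.b2n (Nat.testbit (@?a x) (@?b x))) => apply (c_b2n_testbit _ a b)
  | |- comp ?Z (fun x => Nat.b2n (?Z (@?a x))) => apply (c_b2n_Z _ a)
  | |- comp _ (fun x => Nat.b2n (fa (fun i => @?E x i) (@?b x))) => apply (c_fa _ E b)
  | |- comp _ (fun x => Nat.b2n (ex (fun i => @?E x i) (@?b x))) => apply (c_ex _ E b)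
  | |- comp _ (fun x => cnt (fun i => @?E x i) (@?b x)) => apply (c_cnt _ E b)
  | |- comp _ (fun x => x) => apply comp_id
  | |- comp _ unfst => apply (comp_unfst _ (fun x => x)); apply comp_id
  | |- comp _ unsnd => apply (comp_unsnd _ (fun x => x)); apply comp_id
  | |- comp _ (fun _ => ?c) => apply comp_const
  | |- comp _ (fun x => S (@?a x)) => apply (comp_S _ a)
  | |- comp _ (fun x => unfst (@?a x)) => apply (comp_unfst _ a)
  | |- comp _ (fun x => unsnd (@?a x)) => apply (comp_unsnd _ a)
  | |- comp _ (fun x => pair (@?a x) (@?b x)) => apply (comp_pair _ a b)
  | |- comp ?Z (fun x => if ?Z (@?a x) then 1 else 0) => apply (comp_Z _ a)
  | |- comp _ (fun x => prec ?f ?g (@?a x) (@?b x)) => apply (comp_prec _ f g a b)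
  | |- comp _ (fun x => ?g (@?a x) (@?b x) (@?c x)) =>
        apply (comp3_app _ g a b c); [first [assumption | solve [eauto with cdb]] | | |]
  | |- comp _ (fun x => ?g (@?a x) (@?b x)) =>
        apply (comp2_app _ g a b); [first [assumption | solve [eauto with cdb]] | |]
  | |- comp _ (fun x => ?g (@?a x)) =>
        apply (comp_o _ g a); [first [assumption | solve [eauto with cdb]] | ]
  | |- comp _ ?f => assumption
  end.

Definition len (N : nat) : nat := cnt (fun i => 2 ^ (S i) <=? N) N.
Lemma c_len Z : comp Z len.
Proof. unfold len. bt. Qed.
Hint Resolve c_len : cdb.

Definition good (k : nat) (G : nat -> nat -> nat -> nat) (b : nat -> bool) (L : nat) : bool :=
  fa (fun t => implb (k*t + k <=? L) (ex (fun j => b (k*t+j)) k)) L &&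
  fa (fun j => fa (fun m => implb (ex (fun u => 1 <=? G j m u) (S L))
       (negb (fa (fun i => implb (Nat.testbit m i) ((k*i+j <? L) && b (k*i+j))) (S m)))) L) k.

Definition tree k G : set := fun n => good k G (Nat.testbit (S n)) (len (S n)).

Lemma c_tree Z k G : comp3 Z G -> comp Z (fun n => Nat.b2n (tree k G n)).
Proof. intro HG. unfold tree, good. bt. Qed.

Lemma fa_true q n : fa q n = true <-> forall i, i < n -> q i = true.
Proof. induction n; simpl. split; auto; intros; lia.
  rewrite andb_true_iff, IHn. split.
  - intros [H1 H2] i Hi. destruct (Nat.eq_dec i n). subst; auto. apply H1; lia.
  - intros H. split; auto. Qed.
Lemma ex_true q n : ex q n = true <-> exists i, i < n /\ q i = true.
Proof. unfold ex. rewrite negb_true_iff. split.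
  - intro H. destruct (fa (fun i => negb (q i)) n) eqn:E; [discriminate|].
    apply not_true_iff_false in E. rewrite fa_true in E.
    destruct (classic (exists i, i < n /\ q i = true)) as [?|Hn]; auto.
    exfalso. apply E. intros i Hi. destruct (q i) eqn:Eq; auto. exfalso; apply Hn; exists i; auto.
  - intros [i [Hi Hq]]. apply not_true_iff_false. rewrite fa_true. intro H.
    specialize (H i Hi). rewrite Hq in H. discriminate. Qed.
Lemma fa_ext q q' n : (forall i, i < n -> q i = q' i) -> fa q n = fa q' n.
Proof. intro H. induction n; simpl. auto. rewrite IHn by (intros; apply H; lia). rewrite H by lia. auto. Qed.
Lemma ex_ext q q' n : (forall i, i < n -> q i = q' i) -> ex q n = ex q' n.
Proof. intro H. unfold ex. f_equal. apply fa_ext. intros. rewrite H; auto. Qed.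

Lemma cnt_lt q n L : (forall i, i < n -> q i = (i <? L)) -> L <= n -> cnt q n = L.
Proof. intros H HL. assert (forall m, m <= n -> cnt q m = min m L).
  { induction m; intro Hm; cbn [cnt]. reflexivity. rewrite IHm by lia. rewrite H by lia.
    destruct (m <? L) eqn:E; [apply Nat.ltb_lt in E|apply Nat.ltb_ge in E]; cbn [Nat.b2n]; lia. }
  rewrite H0 by lia. lia. Qed.

Lemma len_spec N L : 2 ^ L <= N -> N < 2 ^ (S L) -> len N = L.
Proof. intros H1 H2. unfold len. apply cnt_lt.
  - intros i Hi. destruct (S i <=? L) eqn:E.
    + apply Nat.leb_le in E. assert (i < L) by lia. rewrite (proj2 (Nat.ltb_lt i L) H).
      apply Nat.leb_le. eapply Nat.le_trans; [|exact H1]. apply Nat.pow_le_mono_r; lia.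
    + apply Nat.leb_gt in E. assert (~ i < L) by lia. destruct (i <? L) eqn:E2. apply Nat.ltb_lt in E2; lia.
      apply Nat.leb_gt. eapply Nat.lt_le_trans; [exact H2|]. apply Nat.pow_le_mono_r; lia.
  - pose proof (Nat.pow_gt_lin_r 2 L ltac:(lia)). lia. Qed.

Lemma strcode_S b s : strcode (b :: s) + 1 = 2 * (strcode s + 1) + Nat.b2n b.
Proof. simpl. destruct b; simpl; lia. Qed.
Lemma strcode_bounds s : 2 ^ length s <= strcode s + 1 < 2 ^ (S (length s)).
Proof. induction s as [|b s IH]. simpl. lia. rewrite strcode_S. simpl length.
  rewrite !Nat.pow_succ_r'. rewrite Nat.pow_succ_r' in IH. destruct b; simpl Nat.b2n; lia. Qed.
Lemma strcode_bits s i : i < length s -> Nat.testbit (strcode s + 1) i = nth i s false.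
Proof. revert i. induction s as [|b s IH]; intros i Hi. simpl in Hi; lia.
  rewrite strcode_S. destruct i.
  - destruct b; simpl Nat.b2n. rewrite Nat.testbit_odd_0; auto. rewrite Nat.add_0_r, Nat.testbit_even_0. auto.
  - simpl nth. simpl in Hi. destruct b; simpl Nat.b2n.
    rewrite Nat.testbit_odd_succ by lia. apply IH; lia.
    rewrite Nat.add_0_r, Nat.testbit_even_succ by lia. apply IH; lia. Qed.

Lemma good_ext k G b b' L : (forall i, i < L -> b i = b' i) -> good k G b L = good k G b' L.
Proof. intro H. unfold good. f_equal.
  - apply fa_ext. intros t Ht. destruct (k*t+k <=? L) eqn:E; simpl; auto. apply Nat.leb_le in E.
    apply ex_ext. intros j Hj. apply H. lia.
  - apply fa_ext. intros j Hj. apply fa_ext. intros m Hm. f_equal. f_equal. apply fa_ext. intros i Hi.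
    f_equal. destruct (k*i+j <? L) eqn:E; simpl; auto. apply Nat.ltb_lt in E. apply H; auto. Qed.

Lemma good_mono k G b L L' : good k G b L = true -> L' <= L -> good k G b L' = true.
Proof. unfold good. rewrite !andb_true_iff, !fa_true. intros [HA HB] HL. split.
  - intros t Ht. specialize (HA t ltac:(lia)). destruct (k*t+k <=? L') eqn:E; auto.
    apply Nat.leb_le in E. rewrite (proj2 (Nat.leb_le (k*t+k) L) ltac:(lia)) in HA. exact HA.
  - intros j Hj. rewrite fa_true. intros m Hm. specialize (HB j Hj). rewrite fa_true in HB.
    specialize (HB m ltac:(lia)). destruct (ex _ (S L')) eqn:E1; auto. simpl.
    rewrite ex_true in E1. destruct E1 as [u [Hu Gu]].
    assert (ex (fun u => 1 <=? G j m u) (S L) = true) as E2 by (apply ex_true; exists u; split; auto; lia).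
    rewrite E2 in HB. change (implb true ?x) with x in HB |- *.
    rewrite negb_true_iff. rewrite negb_true_iff in HB.
    destruct (fa (fun i => implb (Nat.testbit m i) ((k*i+j <? L') && b (k*i+j))) (S m)) eqn:C; [|exact C].
    exfalso.
    assert (fa (fun i => implb (Nat.testbit m i) ((k*i+j <? L) && b (k*i+j))) (S m) = true) as D.
    { rewrite fa_true in *. intros i Hi. specialize (C i Hi). destruct (Nat.testbit m i); auto.
      change (implb true ?x) with x in C |- *. rewrite andb_true_iff, Nat.ltb_lt in *. destruct C. split; auto. lia. }
    congruence. Qed.

Lemma in_tree_iff k G s : in_tree (tree k G) s <-> good k G (fun i => nth i s false) (length s) = true.
Proof. unfold in_tree, tree. replace (S (strcode s)) with (strcode s + 1) by lia.
  destruct (strcode_bounds s). rewrite (len_spec _ (length s)) by auto.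
  rewrite (good_ext _ _ _ (fun i => nth i s false)). reflexivity. apply strcode_bits. Qed.

Lemma testbit_le m i : Nat.testbit m i = true -> i <= m.
Proof. intro H. destruct (le_lt_dec i m) as [?|Hl]; auto.
  rewrite Nat.bits_above_log2 in H. discriminate.
  pose proof (Nat.log2_le_lin m ltac:(lia)). lia. Qed.

Lemma prefix_nth P n i : i < n -> nth i (prefix_of P n) false = P i.
Proof. intro H. unfold prefix_of. rewrite nth_indep with (d' := P 0).
  rewrite map_nth, seq_nth; auto. rewrite length_map, length_seq; auto. Qed.
Lemma prefix_len P n : length (prefix_of P n) = n.
Proof. unfold prefix_of. rewrite length_map, length_seq. auto. Qed.

Lemma in_tree_prefix k G P n : in_tree (tree k G) (prefix_of P n) <-> good k G P n = true.
Proof. rewrite in_tree_iff, prefix_len. rewrite (good_ext _ _ _ P). reflexivity.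
  intros. apply prefix_nth; auto. Qed.

Lemma strcode_ge s : length s <= strcode s.
Proof. destruct (strcode_bounds s). pose proof (Nat.pow_gt_lin_r 2 (length s) ltac:(lia)). lia. Qed.

Definition Dj (Wj : nat -> nat -> Prop) j (Y : set) : Prop :=
  exists m, Wj j m /\ forall i, Nat.testbit m i = true -> Y i = true.

Lemma divmod k t j : j < k -> (k * t + j) / k = t /\ (k * t + j) mod k = j.
Proof. intro H. split; symmetry; [apply (Nat.div_unique _ _ _ j) | apply (Nat.mod_unique _ _ t)]; auto. Qed.

Lemma tree_good_cover (k : nat) (G : nat -> nat -> nat -> nat) (Wj : nat -> nat -> Prop)
  (Hs : forall j m u, j < k -> 1 <= G j m u -> Wj j m)
  (Ys : nat -> set) :
  (forall n, exists j, j < k /\ Ys j n = true) ->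
  (forall j, j < k -> ~ Dj Wj j (Ys j)) ->
  forall n, good k G (fun x => Ys (x mod k) (x / k)) n = true.
Proof. intros Hcov HD n. unfold good. rewrite andb_true_iff, !fa_true. split.
  - intros t Ht. destruct (k*t+k <=? n); auto. change (implb true ?x) with x.
    apply ex_true. destruct (Hcov t) as [j [Hj Hy]]. exists j. split; auto.
    destruct (divmod k t j Hj) as [E1 E2]. rewrite E1, E2. auto.
  - intros j Hj. rewrite fa_true. intros m Hm.
    destruct (ex _ (S n)) eqn:E; auto. change (implb true ?x) with x.
    apply ex_true in E. destruct E as [u [_ Hu]]. apply Nat.leb_le in Hu.
    pose proof (Hs j m u Hj Hu) as W. rewrite negb_true_iff.
    destruct (fa _ (S m)) eqn:C; [|first [reflexivity|exact C]]. exfalso. apply (HD j Hj). exists m. split; auto.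
    intros i Hi. rewrite fa_true in C. specialize (C i ltac:(pose proof (testbit_le _ _ Hi); lia)).
    rewrite Hi in C. change (implb true ?x) with x in C. apply andb_true_iff in C. destruct C as [_ C].
    destruct (divmod k i j Hj) as [E1 E2]. rewrite E1, E2 in C. auto.
Qed.

Lemma path_props (k : nat) (G : nat -> nat -> nat -> nat) (Wj : nat -> nat -> Prop)
  (Hk : 1 <= k)
  (Hc : forall j m, j < k -> Wj j m -> exists u, 1 <= G j m u) (P : set) :
  is_path P (tree k G) ->
  (forall n, exists j, j < k /\ P (k * n + j) = true) /\
  (forall j, j < k -> ~ Dj Wj j (fun n => P (k * n + j))).
Proof. intro HP. split.
  - intro n. specialize (HP (k * n + k)). apply (proj1 (in_tree_prefix k G P _)) in HP. unfold good in HP.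
    rewrite andb_true_iff, fa_true in HP. destruct HP as [HA _].
    specialize (HA n ltac:(nia)). rewrite (proj2 (Nat.leb_le (k*n+k) (k*n+k)) ltac:(lia)) in HA.
    change (implb true ?x) with x in HA. apply ex_true in HA. destruct HA as [j [? ?]]. eauto.
  - intros j Hj [m [Wm Hm]]. destruct (Hc j m Hj Wm) as [u Hu].
    set (L := u + m + 1 + k * m + k).
    specialize (HP L). apply (proj1 (in_tree_prefix k G P _)) in HP. unfold good in HP.
    rewrite andb_true_iff, !fa_true in HP. destruct HP as [_ HB].
    specialize (HB j Hj). rewrite fa_true in HB. specialize (HB m ltac:(unfold L; lia)).
    assert (ex (fun u => 1 <=? G j m u) (S L) = true) as E by (apply ex_true; exists u; split; [unfold L; lia | apply Nat.leb_le; auto]).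
    rewrite E in HB. change (implb true ?x) with x in HB. rewrite negb_true_iff in HB.
    destruct (fa _ (S m)) eqn:C; [discriminate|]. clear HB. apply not_true_iff_false in C. apply C.
    rewrite fa_true. intros i Hi. destruct (Nat.testbit m i) eqn:Ti; auto. change (implb true ?x) with x.
    apply andb_true_iff. split. apply Nat.ltb_lt. unfold L. nia. apply Hm. auto.
Qed.

Lemma join_even (X Y : set) n : join X Y (2 * n) = X n.
Proof. unfold join. rewrite Nat.even_even, Nat.div2_double. auto. Qed.
Lemma join_odd (X Y : set) n : join X Y (2 * n + 1) = Y n.
Proof. unfold join. rewrite Nat.even_odd, Nat.div2_odd'. auto. Qed.

Lemma comp_code Z (X : set) (f : nat -> nat) : comp Z f -> (forall n, f n = if X n then 1 else 0) ->
  exists c, forall n, eval Z c n (if X n then 1 else 0).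
Proof. intros [c Hc] H. exists c. intro n. rewrite <- H. auto. Qed.

Lemma multi_oracle M (Xf : nat -> set) k : scott_coded M -> (forall j, j < k -> inM M (Xf j)) ->
  exists Z, inM M Z /\ exists af : nat -> code, forall j, j < k -> forall n, eval Z (af j) n (if Xf j n then 1 else 0).
Proof. intros HS. induction k; intro HX.
  - exists (col M 0). split. exists 0. auto. exists (fun _ => cZero). intros; lia.
  - destruct IHk as [Z [HZ [af Haf]]]. intros; apply HX; lia.
    exists (join Z (Xf k)). split. apply (proj1 (proj2 HS)); auto.
    destruct (comp_code (join Z (Xf k)) Z (fun n => if join Z (Xf k) (2 * n) then 1 else 0)) as [d0 Hd0].
    { bauto. } { intro n. rewrite join_even. auto. }
    destruct (comp_code (join Z (Xf k)) (Xf k) (fun n => if join Z (Xf k) (2 * n + 1) then 1 else 0)) as [d1 Hd1].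
    { bauto. } { intro n. rewrite join_odd. auto. }
    exists (fun j => if j <? k then rel d0 (af j) else d1). intros j Hj n.
    destruct (j <? k) eqn:E.
    + apply Nat.ltb_lt in E. apply (rel_fwd _ Z); auto.
    + apply Nat.ltb_ge in E. replace j with k by lia. auto.
Qed.

Definition Uc (Z : set) (c : code) : cls :=
  fun Y => exists m, (exists v, eval Z c m v) /\ forall i, Nat.testbit m i = true -> Y i = true.

Lemma U_Uc (Z X : set) d e Y : (forall n, eval Z d n (if X n then 1 else 0)) ->
  U X e Y <-> Uc Z (rel d (decode e)) Y.
Proof. intro Hd. unfold U, Uc, W, canon. split; intros [m [[v Hv] Hm]]; exists m; split; auto; exists v.
  apply (rel_fwd Z X); auto. apply (rel_bwd Z X d); auto. Qed.

Fixpoint gsel Z (cj : nat -> code) (k : nat) : nat -> nat -> nat -> nat :=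
  match k with
  | 0 => fun _ _ _ => 0
  | S k => fun j m u => ifz (Nat.b2n (j =? k)) (gsel Z cj k j m u) (bsim Z (cj k) m u)
  end.

Lemma gsel_spec Z cj k j m u : j < k -> gsel Z cj k j m u = bsim Z (cj j) m u.
Proof. induction k; intro H. lia. simpl. destruct (j =? k) eqn:E; simpl.
  apply Nat.eqb_eq in E. subst. auto. apply Nat.eqb_neq in E. apply IHk. lia. Qed.

Lemma c_gsel Z cj k : comp3 Z (gsel Z cj k).
Proof. induction k; simpl. bauto.
  pose proof (c_bsim Z (cj k)). unfold comp3 in *. bt. Qed.

Lemma not_L_self (Y : set) : ~ L (compl Y) Y.
Proof. intro H. destruct (H 0) as [m [_ Hm]]. unfold compl in Hm. destruct (Y m); discriminate. Qed.
Lemma not_L_self' (Y : set) : ~ L Y (compl Y).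
Proof. intro H. destruct (H 0) as [m [_ Hm]]. unfold compl in Hm. destruct (Y m); discriminate. Qed.

Lemma keyK M C X e Y : M_cohesive M (UC M C) -> inM M Y -> UC M C Y ->
  largeness (cls_inter (UC M C) (U X e)) -> U X e Y.
Proof. intros Hco HY HUY [_ [_ Hcov]].
  destruct (Hco Y HY) as [H1|H1]; [| exfalso; apply (not_L_self Y); auto].
  destruct (Hcov 2 (fun j => if j =? 0 then Y else compl Y)) as [j [Hj [HA HB]]].
  { intro n. destruct (Y n) eqn:E. exists 0. auto. exists 1. split. lia. simpl. unfold compl. rewrite E. auto. }
  destruct j as [|[|]]; simpl in *; try lia. auto. exfalso. apply (not_L_self' Y). auto. Qed.

Lemma fin_choice (P : nat -> nat -> set -> Prop) k :
  (forall j, j < k -> exists e X, P j e X) ->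
  exists (ef : nat -> nat) (Xf : nat -> set), forall j, j < k -> P j (ef j) (Xf j).
Proof. induction k; intro H. exists (fun _ => 0), (fun _ => fun _ => false). intros; lia.
  destruct IHk as [ef [Xf Hf]]. intros; apply H; lia.
  destruct (H k ltac:(lia)) as [e [X HX]].
  exists (fun j => if j =? k then e else ef j), (fun j => if j =? k then X else Xf j).
  intros j Hj. destruct (j =? k) eqn:E. apply Nat.eqb_eq in E; subst; auto.
  apply Nat.eqb_neq in E. apply Hf. lia. Qed.

Lemma U_up X e Y Y' : U X e Y -> subset Y Y' -> U X e Y'.
Proof. intros [m [Hm1 Hm2]] Hs. exists m. split; auto. Qed.
Lemma UC_up M C Y Y' : UC M C Y -> subset Y Y' -> UC M C Y'.
Proof. intros H Hs e i Hc. eapply U_up; eauto. Qed.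

Lemma gen_sub M C : largeness (UC M C) -> cls_sub (gen M C) (UC M C).
Proof. intros [[Y0 HY0] [Hup Hcov]] Y HY e i Hc. apply (HY e (col M i)). exists i; auto.
  split; [|split].
  - exists Y0. split; auto.
  - intros A B [HA1 HA2] Hs. split. eauto. eapply U_up; eauto.
  - intros k Ys Hk. destruct (Hcov k Ys Hk) as [j [Hj HU]]. exists j. split; auto. split; auto. Qed.

Lemma gen_cover M C : scott_coded M -> largeness (UC M C) -> M_cohesive M (UC M C) ->
  forall (k : nat) (Ys : nat -> set), (forall n, exists j, j < k /\ Ys j n = true) ->
  exists j, j < k /\ gen M C (Ys j).
Proof. intros HS HL Hco k Ys Hk.
  destruct (classic (exists j, j < k /\ gen M C (Ys j))) as [?|Hn]; auto. exfalso.
  assert (Hk1 : 1 <= k) by (destruct (Hk 0) as [j [? _]]; lia).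
  assert (forall j, j < k -> exists e X, inM M X /\ largeness (cls_inter (UC M C) (U X e)) /\ ~ U X e (Ys j)) as Hb.
  { intros j Hj. apply NNPP. intro Hc. apply Hn. exists j. split; auto. intros e X HX HlX.
    apply NNPP. intro HU. apply Hc. exists e, X. auto. }
  destruct (fin_choice _ k Hb) as [ef [Xf Hf]].
  destruct (multi_oracle M Xf k HS) as [Z [HZ [af Haf]]]. { intros j Hj. apply Hf; auto. }
  set (cj := fun j => rel (af j) (decode (ef j))).
  set (G := gsel Z cj k).
  set (Wj := fun j m => exists v, eval Z (cj j) m v).
  assert (HDU : forall j Y, j < k -> (Dj Wj j Y <-> U (Xf j) (ef j) Y)).
  { intros j Y Hj. rewrite (U_Uc Z (Xf j) (af j)) by (apply Haf; auto). unfold Dj, Uc. reflexivity. }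
  assert (Hs : forall j m u, j < k -> 1 <= G j m u -> Wj j m).
  { intros j m u Hj HG. unfold G in HG. rewrite gsel_spec in HG by auto.
    destruct (bsim Z (cj j) m u) eqn:E. lia. exists n. eapply bsim_sound; eauto. }
  assert (Hc : forall j m, j < k -> Wj j m -> exists u, 1 <= G j m u).
  { intros j m Hj [v Hv]. destruct (bsim_complete _ _ _ _ Hv) as [s0 Hs0]. exists s0.
    unfold G. rewrite gsel_spec by auto. rewrite Hs0; lia. }
  set (T := tree k G).
  assert (HT : inM M T).
  { apply (proj1 HS) with Z; auto. destruct (c_tree Z k G) as [c Hcc]. apply c_gsel.
    exists c. exact Hcc. }
  assert (Htree : is_tree T).
  { intros s t Hst. unfold T in *. rewrite in_tree_iff in *. rewrite length_app in Hst.
    apply (good_mono _ _ _ _ (length s)) in Hst; [|lia].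
    rewrite (good_ext _ _ _ (fun i => nth i s false)) in Hst; auto.
    intros i Hi. apply app_nth1; auto. }
  assert (Hinf : infinite T).
  { intro n. set (P0 := fun x => Ys (x mod k) (x / k)).
    exists (strcode (prefix_of P0 n)). split.
    - pose proof (strcode_ge (prefix_of P0 n)). rewrite prefix_len in H. lia.
    - change (in_tree T (prefix_of P0 n)). unfold T. apply in_tree_prefix.
      apply (tree_good_cover k G Wj Hs Ys Hk). intros j Hj HD. apply HDU in HD; auto.
      destruct (Hf j Hj) as [_ [_ HnU]]. auto. }
  destruct (proj2 (proj2 HS) T HT Htree Hinf) as [P [HP Hpath]].
  destruct (path_props k G Wj Hk1 Hc P Hpath) as [Hcov' HnD].
  destruct (proj2 (proj2 HL) k (fun j n => P (k * n + j)) Hcov') as [j [Hj HUC]].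
  assert (HYj : inM M (fun n => P (k * n + j))).
  { apply (proj1 HS) with P; auto.
    destruct (comp_code P (fun n => P (k * n + j)) (fun n => if P (k * n + j) then 1 else 0)) as [c Hcc].
    bauto. auto. exists c. auto. }
  destruct (Hf j Hj) as [HXj [HLj _]].
  apply (HnD j Hj). apply HDU; auto. eapply keyK; eauto.
Qed.

Theorem lemma2p11 (M : set) (C : nat -> nat -> Prop) :
  scott_coded M ->
  largeness (UC M C) ->
  M_cohesive M (UC M C) ->
  largeness (gen M C) /\ M_minimal M (gen M C) /\ cls_sub (gen M C) (UC M C).
Proof. intros HS HL Hco. pose proof (gen_sub M C HL) as Hsub. split; [|split; auto].
  - split; [|split].
    + exists (fun _ => true). intros e X HX [[Y0 [_ HY0]] _]. eapply U_up; eauto. intros n _. auto.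
    + intros Y Y' HY Hs e X HX Hl. eapply U_up; eauto.
    + apply gen_cover; auto.
  - intros X e HX. destruct (classic (largeness (cls_inter (gen M C) (U X e)))) as [Hl|Hl]; [left|right; auto].
    intros Y HY. apply HY; auto. destruct Hl as [[Y0 [HY0a HY0b]] [Hup Hcov]]. split; [|split].
    + exists Y0. split; auto.
    + intros A B [HA1 HA2] Hs. split. eapply UC_up; eauto. eapply U_up; eauto.
    + intros k Ys Hk. destruct (Hcov k Ys Hk) as [j [Hj [H1 H2]]]. exists j. split; auto. split; auto.
Qed.
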